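(* Let $G$ be a finite simple connected graph, let $S\subseteq V(G)$ with $|S|\geq 2$, and let $T_1,\dots,T_k$ ($k\geq 2$) be $S$-Steiner trees in $G$. Then $T_1,\dots,T_k$ are completely independent $S$-Steiner trees if and only if they are pairwise edge-disjoint and, for every vertex $w\in V(G)$, there is at most one index $i$ with $d_{T_i}(w)>1$.
   Context: For $S\subseteq V(G)$ with $|S|\ge 2$, an $S$-Steiner tree of $G$ is a subtree $T$ of $G$ with $S\subseteq V(T)$ all of whose leaves belong to $S$. $S$-Steiner trees $T_1,\dots,T_k$ are called completely independent $S$-Steiner trees (CISSTs) if for all $1\le p<q\le k$: $E(T_p)\cap E(T_q)=\emptyset$, $V(T_p)\cap V(T_q)=S$, and for any two vertices $x_1,x_2\in S$ the $(x_1,x_2)$-paths in $T_p$ and in $T_q$ are internally disjoint. $d_{T}(w)$ denotes the degree of $w$ in $T$ (taken to be $0$ if $w\notin V(T)$). *)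

(* Defs.v *)
(* Graphs: G = (V, e) with V : finType, e : rel V
   symmetric and irreflexive (finite simple graph).  A subgraph is a pair
   (vertex set, edge set) where edges are 2-element vertex sets. *)
From mathcomp Require Import all_boot.
Set Implicit Arguments. Unset Strict Implicit. Unset Printing Implicit Defensive.

Section Steiner.
Variables (V : finType) (e : rel V).

Definition simple_graph : Prop := symmetric e /\ irreflexive e.

Definition graph_connected : Prop := forall x y : V, connect e x y.

Definition subgraph := ({set V} * {set {set V}})%type.

Definition sV (T : subgraph) : {set V} := T.1.
Definition sE (T : subgraph) : {set {set V}} := T.2.

Definition wf_subgraph (T : subgraph) : Prop :=
  forall f, f \in sE T ->
    exists x y, [/\ x \in sV T, y \in sV T, e x y & f = [set x; y]].

Definition tadj (T : subgraph) : rel V := fun a b => [set a; b] \in sE T.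

Definition deg (T : subgraph) (w : V) : nat := #|[set f in sE T | w \in f]|.

Definition is_tpath (T : subgraph) (x y : V) (p : seq V) : Prop :=
  [/\ x \in sV T, all (fun v => v \in sV T) p, path (tadj T) x p,
      last x p = y & uniq (x :: p)].

Definition internal (x y : V) (p : seq V) : seq V :=
  [seq v <- x :: p | (v != x) && (v != y)].

Definition has_cycle (T : subgraph) : Prop :=
  exists x p, [/\ x \in sV T, all (fun v => v \in sV T) p, path (tadj T) x p,
      uniq (x :: p) & 2 <= size p] /\ tadj T (last x p) x.

Definition is_tree (T : subgraph) : Prop :=
  [/\ wf_subgraph T,
      forall x y, x \in sV T -> y \in sV T -> exists p, is_tpath T x y p
    & ~ has_cycle T].

Definition steiner_tree (S : {set V}) (T : subgraph) : Prop :=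
  [/\ is_tree T, S \subset sV T &
      forall w, w \in sV T -> deg T w = 1 -> w \in S].

Definition CISST (S : {set V}) (k : nat) (Ts : 'I_k -> subgraph) : Prop :=
  forall p q : 'I_k, p < q ->
    [/\ sE (Ts p) :&: sE (Ts q) = set0,
        sV (Ts p) :&: sV (Ts q) = S &
        forall x1 x2, x1 \in S -> x2 \in S ->
          forall P Q, is_tpath (Ts p) x1 x2 P -> is_tpath (Ts q) x1 x2 Q ->
            forall v, v \in internal x1 x2 P -> v \notin internal x1 x2 Q].

End Steiner.

(* Main.v *)
Require Import Defs.
From mathcomp Require Import all_boot.
From Stdlib Require Import Classical.
From mathcomp Require Import zify.
Set Implicit Arguments. Unset Strict Implicit. Unset Printing Implicit Defensive.

Lemma tadjC (V : finType) (T : subgraph V) x y : tadj T x y = tadj T y x.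
Proof. by rewrite /tadj setUC. Qed.

Lemma tadj_sV (V : finType) (e : rel V) (T : subgraph V) x y :
  irreflexive e -> wf_subgraph e T -> tadj T x y ->
  [/\ x \in sV T, y \in sV T & x != y].
Proof.
move=> irr wf /wf [x0 [y0 [hx hy exy hf]]].
have hx' : x \in [set x; y] by rewrite !inE eqxx.
have hy' : y \in [set x; y] by rewrite !inE eqxx orbT.
rewrite hf !inE in hx' hy'.
split.
- by case/orP: hx' => /eqP->.
- by case/orP: hy' => /eqP->.
- apply/eqP=> exy'; subst y.
  have : x0 \in [set x; x] by rewrite hf !inE eqxx.
  have : y0 \in [set x; x] by rewrite hf !inE eqxx orbT.
  rewrite !inE !orbb => /eqP h1 /eqP h2; subst.
  by rewrite irr in exy.
Qed.

Lemma splitE (T : eqType) (v : T) s : v \in s -> exists s1 s2, s = s1 ++ v :: s2.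
Proof. by case/splitPr => s1 s2; exists s1, s2. Qed.

Lemma sorted_suffix (T : Type) (r : rel T) s1 s2 : sorted r (s1 ++ s2) -> sorted r s2.
Proof. by move/cat_sorted2=> []. Qed.

Lemma uniq_suffix (T : eqType) (s1 s2 : seq T) : uniq (s1 ++ s2) -> uniq s2.
Proof. by rewrite cat_uniq => /and3P []. Qed.

Lemma last_split (T : eqType) (x v : T) p s1 s2 :
  x :: p = s1 ++ v :: s2 -> last x p = last v s2.
Proof.
case: s1 => [|y s1] /= [] -> ->; first by [].
by rewrite last_cat.
Qed.

Lemma edge_deg (V : finType) (T : subgraph V) w u :
  tadj T w u -> [set w; u] \in [set f in sE T | w \in f].
Proof. by move=> h; rewrite inE; apply/andP; split; [exact: h | rewrite !inE eqxx]. Qed.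

Lemma edge_in (V : finType) (T : subgraph V) a b w :
  tadj T a b -> w \in [set a; b] -> [set a; b] \in [set f in sE T | w \in f].
Proof. by move=> h hw; rewrite inE; apply/andP; split. Qed.

Lemma deg_sV (V : finType) (e : rel V) (T : subgraph V) w :
  wf_subgraph e T -> 0 < deg T w -> w \in sV T.
Proof.
move=> wf /card_gt0P [f]; rewrite inE => /andP [/wf [x [y [hx hy _ ->]]]].
by rewrite !inE => /orP [] /eqP ->.
Qed.

Lemma internal_deg (V : finType) (e : rel V) (T : subgraph V) x y P v :
  irreflexive e -> wf_subgraph e T ->
  is_tpath T x y P -> v \in internal x y P -> 1 < deg T v.
Proof.
move=> irr wf [hx hall hp hl hu].
rewrite mem_filter => /andP [/andP [vx vy] vin].
case: (splitE vin) => s1 [s2 E].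
have hlast := last_split E.
case: s2 E hlast => [|u2 s2] E hlast.
  by move: hlast; rewrite hl /= => h; rewrite h eqxx in vy.
case: s1 E {hlast} => [|u1 s1] E; first by case: E => h; rewrite h eqxx in vx.
have hs : sorted (tadj T) (x :: P) by [].
rewrite E in hs hu.
case/lastP: s1 E hs hu => [|s1' u1'] E hs hu.
-
  move: hs => /= /andP [a1 /andP [a2 _]].
  case/and4P: hu => hu _ _ _; have n12 : u1 != u2 by apply: contra hu => /eqP ->; rewrite !inE eqxx orbT.
  rewrite /deg.
  apply/card_gt1P; exists [set u1; v], [set v; u2]; split.
  + by apply: edge_in a1 _; rewrite !inE eqxx orbT.
  + by apply: edge_in a2 _; rewrite !inE eqxx.
  + apply/eqP=> h; have : u1 \in [set v; u2] by rewrite -h !inE eqxx.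
    rewrite !inE (negbTE n12) orbF => /eqP h1; subst u1.
    by move: (tadj_sV irr wf a1) => [_ _]; rewrite eqxx.
  move: hs hu. rewrite -rcons_cons cat_rcons => /sorted_suffix /= /and3P [a1 a2 _].
  move=> /andP [_ /uniq_suffix /andP [hu _]].
  have n12 : u1' != u2 by apply: contra hu => /eqP ->; rewrite !inE eqxx orbT.
  rewrite /deg; apply/card_gt1P; exists [set u1'; v], [set v; u2]; split.
  + by apply: edge_in a1 _; rewrite !inE eqxx orbT.
  + by apply: edge_in a2 _; rewrite !inE eqxx.
  + apply/eqP=> h; have : u1' \in [set v; u2] by rewrite -h !inE eqxx.
    rewrite !inE (negbTE n12) orbF => /eqP h1; subst u1'.
    by move: (tadj_sV irr wf a1) => [_ _]; rewrite eqxx.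
Qed.

Lemma deg_pos (V : finType) (e : rel V) (S : {set V}) (T : subgraph V) w :
  steiner_tree e S T -> 2 <= #|S| -> w \in sV T -> 0 < deg T w.
Proof.
move=> [[wf conn _] sub _] /card_gt1P [y1 [y2 [h1 h2 n12]]] hw.
have [y [yS yw]] : exists y, y \in S /\ y != w.
  case: (eqVneq y1 w) => [e1|]; last by exists y1.
  by exists y2; split=> //; rewrite -e1 eq_sym.
have [p [_ _ hp hl _]] := conn w y hw (subsetP sub y yS).
case: p hp hl => [|u p] /=; first by move=> _ h; rewrite h eqxx in yw.
move=> /andP [a _] _; apply/card_gt0P; exists [set w; u].
by apply: edge_in a _; rewrite !inE eqxx.
Qed.

Definition conn_avoid (V : finType) (T : subgraph V) (w x y : V) : Prop :=
  exists p, [/\ all (fun v => v \in sV T) (x :: p), path (tadj T) x p,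
                last x p = y & w \notin x :: p].

Lemma conn_avoid_trans (V : finType) (T : subgraph V) w x y z :
  conn_avoid T w x y -> conn_avoid T w y z -> conn_avoid T w x z.
Proof.
move=> [p [a1 p1 l1 w1]] [q [a2 p2 l2 w2]]; exists (p ++ q); split.
- by rewrite -cat_cons all_cat a1; case/andP: a2.
- by rewrite cat_path p1 l1 p2.
- by rewrite last_cat l1 l2.
- by rewrite -cat_cons mem_cat negb_or w1; move: w2; rewrite in_cons negb_or => /andP [].
Qed.

Lemma conn_avoid_sym (V : finType) (T : subgraph V) w x y :
  conn_avoid T w x y -> conn_avoid T w y x.
Proof.
move=> [p [a1 p1 l1 w1]]; exists (rev (belast x p)).
have E : y :: rev (belast x p) = rev (x :: p) by rewrite [x :: p]lastI rev_rcons l1.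
split.
- by rewrite E all_rev.
- rewrite -l1 rev_path; apply: sub_path p1 => a b; by rewrite tadjC.
- have : last y (rev (belast x p)) = last y (y :: rev (belast x p)) by [].
  by rewrite E => ->; rewrite /= rev_cons last_rcons.
- by rewrite E mem_rev.
Qed.

Lemma size_uniq_le (V : finType) (s : seq V) : uniq s -> size s <= #|V|.
Proof. by move/card_uniqP <-; apply: max_card. Qed.

Lemma extend_path (V : finType) (e : rel V) (T : subgraph V) w :
  irreflexive e -> wf_subgraph e T ->
  forall n r, #|V| - size r <= n -> all (fun v => v \in sV T) (w :: r) ->
  path (tadj T) w r -> uniq (w :: r) ->
  exists r', [/\ all (fun v => v \in sV T) (w :: r ++ r'), path (tadj T) w (r ++ r'),
     uniq (w :: r ++ r') &
     forall u, tadj T (last w (r ++ r')) u -> u \in w :: r ++ r'].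
Proof.
move=> irr wf; elim=> [|n IH] r hn ha hp hu.
  have := size_uniq_le hu; rewrite /= => h2; by move: hn; rewrite leqn0 subn_eq0 leqNgt h2.
case: (pickP (fun u => tadj T (last w r) u && (u \notin w :: r))) => [u /andP [hu1 hu2]|hn0].
- have [_ us _] := tadj_sV irr wf hu1.
  have hu' : uniq (w :: rcons r u) by rewrite -rcons_cons rcons_uniq hu2 hu.
  have := size_uniq_le hu'; rewrite /= size_rcons => hsz.
  have b1 : #|V| - size (rcons r u) <= n by move: hn hsz; rewrite size_rcons; lia.
  have b2 : all (fun v => v \in sV T) (w :: rcons r u) by rewrite -rcons_cons all_rcons us ha.
  have b3 : path (tadj T) w (rcons r u) by rewrite rcons_path hp hu1.
  have [r'' [a1 a2 a3 a4]] := IH (rcons r u) b1 b2 b3 hu'.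
  by exists (u :: r''); rewrite -cat_rcons; split=> //.
- exists [::]; rewrite cats0; split=> // u hu1.
  have := hn0 u; rewrite hu1 /= => /negbFE; by [].
Qed.

Lemma edge_other (V : finType) (e : rel V) (T : subgraph V) z f :
  wf_subgraph e T -> f \in sE T -> z \in f -> exists u, f = [set z; u].
Proof.
move=> wf /wf [x [y [_ _ _ ->]]]; rewrite !inE => /orP [] /eqP ->.
- by exists y.
- by exists x; rewrite setUC.
Qed.

Lemma leaf_exists (V : finType) (e : rel V) (S : {set V}) (T : subgraph V) w a :
  irreflexive e -> steiner_tree e S T -> w \in sV T -> tadj T w a ->
  exists z, [/\ z \in S, z != w & conn_avoid T w a z].
Proof.
move=> irr [[wf conn nocyc] sub leaf] hw hwa.
have [_ ha wa] := tadj_sV irr wf hwa.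
have hu0 : uniq [:: w; a] by rewrite /= andbT inE; exact: wa.
have b1 : all (fun v => v \in sV T) [:: w; a] by rewrite /= hw ha.
have b2 : path (tadj T) w [:: a] by rewrite /= andbT.
have [r' [A P U M]] := extend_path irr wf (leqnn _) b1 b2 hu0.
rewrite cat1s in A P U M.
set z := last w (a :: r') in M.
have zin : z \in a :: r' by rewrite /z /= mem_last.
have wn : w \notin a :: r' by case/andP: U.
exists z; split.
- apply: leaf.
  + by move: A => /allP; apply; rewrite in_cons zin orbT.
  +
    have E : a :: r' = rcons (belast a r') z by rewrite /z /= -lastI.
    set r0 := belast a r' in E.
    move: P U A M; rewrite E => P U A M.
    move: (P); rewrite rcons_path => /andP [_ pz].
    rewrite /deg; suff -> : [set f in sE T | z \in f] = [set [set last w r0; z]] by rewrite cards1.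
    apply/setP => f; rewrite !inE; apply/idP/idP.
    * case/andP=> fE zf; have [u fu] := edge_other wf fE zf.
      have tzu : tadj T z u by rewrite /tadj -fu.
      have [_ _ zu] := tadj_sV irr wf tzu.
      have := M u; rewrite /z E last_rcons => /(_ tzu).
      rewrite -rcons_cons mem_rcons in_cons eq_sym (negbTE zu) /= => uin.
      have [s1 [s2 Es]] := splitE uin.
      have hl := last_split Es.
      case: s2 Es hl => [|b s2] Es hl.
        by rewrite fu hl /= setUC.
      exfalso; apply: nocyc; exists u, (rcons (b :: s2) z); split; last first.
        by rewrite last_rcons.
      have L : w :: rcons r0 z = s1 ++ u :: rcons (b :: s2) z.
        by rewrite -rcons_cons Es rcons_cat.
      split.
      - by move: A; rewrite L all_cat => /andP [_ /andP []].
      - by move: A; rewrite L all_cat => /andP [_ /andP []].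
      - by move: P; rewrite -/(sorted _ (w :: _)) L => /sorted_suffix.
      - by move: U; rewrite L => /uniq_suffix.
      - by rewrite size_rcons.
    * move/eqP=> ->; apply/andP; split; first exact: pz.
      by rewrite !inE eqxx orbT.
- by apply: contraNneq wn => <-.
- exists r'; split=> //.
  + by case/andP: A.
  + by case/andP: P.
Qed.

Lemma two_branches (V : finType) (e : rel V) (S : {set V}) (T : subgraph V) w :
  irreflexive e -> steiner_tree e S T -> w \in sV T -> 1 < deg T w ->
  exists z1 z2, [/\ z1 \in S /\ z1 != w, z2 \in S /\ z2 != w & ~ conn_avoid T w z1 z2].
Proof.
move=> irr st hw /card_gt1P [f1 [f2 [h1 h2 n12]]].
have st' := st; case: st' => [[wf conn nocyc] sub leaf].
move: h1 h2; rewrite !inE => /andP [f1E wf1] /andP [f2E wf2].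
have [a fa] := edge_other wf f1E wf1.
have [b fb] := edge_other wf f2E wf2.
have ta : tadj T w a by rewrite /tadj -fa.
have tb : tadj T w b by rewrite /tadj -fb.
have ab : a != b by apply: contraNneq n12 => ab; rewrite fa fb ab.
have [z1 [z1S z1w c1]] := leaf_exists irr st hw ta.
have [z2 [z2S z2w c2]] := leaf_exists irr st hw tb.
exists z1, z2; split=> // c12.
have [p [A P L W]] := conn_avoid_trans (conn_avoid_trans c1 c12) (conn_avoid_sym c2).
have [q [Pq Uq Sq Lq]] : exists q, [/\ path (tadj T) a q, uniq (a :: q),
    {subset q <= p} & last a q = last a p].
  by case: (shortenP P) => q ? ? ?; exists q.
rewrite L in Lq.
apply: nocyc; exists w, (a :: q); split; last by rewrite /= Lq tadjC.
split=> //.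
- apply/allP => v; rewrite in_cons => /orP [/eqP ->|vq].
  + by move/allP: A; apply; rewrite mem_head.
  + by move/allP: A; apply; rewrite in_cons Sq ?orbT.
- by rewrite /= ta.
- rewrite -[uniq (w :: a :: q)]/(_ && uniq (a :: q)) Uq andbT in_cons negb_or. 
  move: W; rewrite in_cons negb_or => /andP [-> wp] /=.
  by apply: contra wp; apply: Sq.
- by case: q Pq Uq Sq Lq => [|? ?] //= _ _ _ E; rewrite E eqxx in ab.
Qed.

Lemma sep2 (X : Type) (D : X -> Prop) (R1 R2 : X -> X -> Prop) :
  (forall x y, R1 x y -> R1 y x) -> (forall x y z, R1 x y -> R1 y z -> R1 x z) ->
  (forall x y, R2 x y -> R2 y x) -> (forall x y z, R2 x y -> R2 y z -> R2 x z) ->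
  forall y1 y2 z1 z2, D y1 -> D y2 -> D z1 -> D z2 -> ~ R1 y1 y2 -> ~ R2 z1 z2 ->
  exists x x', [/\ D x, D x', ~ R1 x x' & ~ R2 x x'].
Proof.
move=> s1 t1 s2 t2 y1 y2 z1 z2 d1 d2 d3 d4 n1 n2.
have [z [dz nz]] : exists z, D z /\ ~ R2 y1 z.
  case: (classic (R2 y1 z1)) => h; last by exists z1.
  case: (classic (R2 y1 z2)) => h'; last by exists z2.
  by exfalso; apply: n2; apply: t2 (s2 _ _ h) h'.
case: (classic (R1 y1 z)) => h; last by exists y1, z.
case: (classic (R2 y1 y2)) => h'; last by exists y1, y2.
exists y2, z; split=> // H.
- by apply: n1; apply: t1 h (s1 _ _ H).
- by apply: nz; apply: t2 h' H.
Qed.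

Lemma tpath_avoid (V : finType) (T : subgraph V) w x y P :
  is_tpath T x y P -> w != x -> w != y -> ~ conn_avoid T w x y ->
  w \in internal x y P.
Proof.
move=> [hx ha hp hl hu] wx wy nc.
rewrite mem_filter wx wy /=.
case: (boolP (w \in x :: P)) => // wn; exfalso; apply: nc.
by exists P; split=> //=; rewrite hx.
Qed.

Unset Implicit Arguments.

Theorem theorem2p1 (V : finType) (e : rel V) (S : {set V}) (k : nat)
    (Ts : 'I_k -> subgraph V) :
  simple_graph e -> graph_connected e -> 2 <= #|S| -> 2 <= k ->
  (forall i, steiner_tree e S (Ts i)) ->
  (CISST S Ts <->
   ((forall p q : 'I_k, p < q -> sE (Ts p) :&: sE (Ts q) = set0) /\
    (forall w : V, #|[set i : 'I_k | 1 < deg (Ts i) w]| <= 1))).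
Proof.
move=> [_ irr] _ S2 _ st.
have wf i : wf_subgraph e (Ts i) by case: (st i) => [[]].
split.
- move=> H; split; first by move=> p q /H [].
  move=> w; rewrite leqNgt; apply/negP => /card_gt1P [i [j [hi hj ij]]].
  rewrite !inE in hi hj.
  suff bad : forall p q : 'I_k, p < q -> 1 < deg (Ts p) w -> 1 < deg (Ts q) w -> False.
    case: (ltngtP i j) => [lt|gt|eq].
    + exact: bad lt hi hj.
    + exact: bad gt hj hi.
    + by move/eqP: ij; apply; apply: val_inj.
  move=> p q lt dp dq.
  have [_ VS IN] := H p q lt.
  have wp := deg_sV (wf p) (ltnW dp).
  have wq := deg_sV (wf q) (ltnW dq).
  have wS : w \in S by rewrite -VS inE wp wq.
  have [y1 [y2 [[y1S y1w] [y2S y2w] ny]]] := two_branches irr (st p) wp dp.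
  have [z1 [z2 [[z1S z1w] [z2S z2w] nz]]] := two_branches irr (st q) wq dq.
  have [x [x' [[xS xw] [x'S x'w] n1 n2]]] :=
    sep2 (D := fun v => v \in S /\ v != w)
      (@conn_avoid_sym _ _ w) (@conn_avoid_trans _ _ w)
      (@conn_avoid_sym _ _ w) (@conn_avoid_trans _ _ w)
      (conj y1S y1w) (conj y2S y2w) (conj z1S z1w) (conj z2S z2w) ny nz.
  case: (st p) => [[_ cp _] sp _]; case: (st q) => [[_ cq _] sq _].
  have [P hP] := cp x x' (subsetP sp x xS) (subsetP sp x' x'S).
  have [Q hQ] := cq x x' (subsetP sq x xS) (subsetP sq x' x'S).
  have := IN x x' xS x'S P Q hP hQ w.
  rewrite (tpath_avoid hP) ?(eq_sym w) // => /(_ isT) /negP; apply.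
  by rewrite (tpath_avoid hQ) ?(eq_sym w).
- move=> [HE HD] p q lt.
  have pq : p != q by apply/eqP => E; rewrite E ltnn in lt.
  have two v : 1 < deg (Ts p) v -> 1 < deg (Ts q) v -> False.
    move=> dp dq; have := HD v; rewrite leqNgt => /negP; apply.
    apply/card_gt1P; exists p, q; split=> //; by rewrite inE.
  split; first exact: HE lt.
  + apply/setP => v; rewrite inE; apply/idP/idP.
    * case/andP=> vp vq; apply/negPn/negP => vS; apply: (two v).
      - case: (st p) => _ _ lf; have := deg_pos (st p) S2 vp.
        by case: (deg (Ts p) v) (lf v vp) => [|[|]] // /(_ erefl); rewrite (negbTE vS).
      - case: (st q) => _ _ lf; have := deg_pos (st q) S2 vq.
        by case: (deg (Ts q) v) (lf v vq) => [|[|]] // /(_ erefl); rewrite (negbTE vS).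
    * move=> vS; case: (st p) => _ sp _; case: (st q) => _ sq _.
      by rewrite (subsetP sp v vS) (subsetP sq v vS).
  + move=> x1 x2 _ _ P Q hP hQ v vP; apply/negP => vQ; apply: (two v).
    * exact: internal_deg irr (wf p) hP vP.
    * exact: internal_deg irr (wf q) hQ vQ.
Qed.
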